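(* Define $f:[0,1]\to\mathbb{R}$ by $f(0)=0$ and, for each $n\in\mathbb{N}$ (with $\mathbb{N}=\{1,2,\dots\}$), $$f(t)=\begin{cases}\frac{1}{n+1}-(2n+1)\left(t-\frac{1}{n+1}\right), & t\in\left[\frac{1}{n+1},\frac{2}{2n+1}\right],\\ (2n+1)\left(t-\frac{2}{2n+1}\right), & t\in\left[\frac{2}{2n+1},\frac1n\right].\end{cases}$$ Then $f$ is well defined and continuous, $\sup\{|f(x)-f(y)|:x,y\in[0,1]\}=1$, and the function $\delta:[0,1)\to[0,\infty)$, $\delta(\epsilon)=\inf\{|x-y| : x,y\in[0,1],\ |f(x)-f(y)|\ge\epsilon\}$, satisfies, for every integer $n\ge 2$, $$\delta(1/n)=\frac{1}{n(2n+1)}<\frac{1}{n(2n-1)}\le\delta(\epsilon)\quad\text{for all }\epsilon\in(1/n,1).$$ In particular $\delta$ is discontinuous at each point $1/n$, $n\ge2$. *)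

(* Defs.v *)
From Stdlib Require Import Reals Lra ClassicalEpsilon.
Open Scope R_scope.

Definition spec_f (f : R -> R) : Prop :=
  f 0 = 0 /\
  forall n : nat, (1 <= n)%nat ->
    (forall t, / (INR n + 1) <= t <= 2 / (2 * INR n + 1) ->
       f t = / (INR n + 1) - (2 * INR n + 1) * (t - / (INR n + 1))) /\
    (forall t, 2 / (2 * INR n + 1) <= t <= / INR n ->
       f t = (2 * INR n + 1) * (t - 2 / (2 * INR n + 1))).

Definition unit_interval (x : R) : Prop := 0 <= x <= 1.

Definition osc_set (f : R -> R) (s : R) : Prop :=
  exists x y, unit_interval x /\ unit_interval y /\ s = Rabs (f x - f y).

Definition dist_set (f : R -> R) (eps : R) (d : R) : Prop :=
  exists x y, unit_interval x /\ unit_interval y /\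
    Rabs (f x - f y) >= eps /\ d = Rabs (x - y).

Definition is_glb (E : R -> Prop) (m : R) : Prop :=
  (forall x, E x -> m <= x) /\ (forall b, (forall x, E x -> b <= x) -> b <= m).

(* delta(eps) = inf dist_set f eps (chosen by Hilbert's epsilon; meaningful
   whenever the infimum exists, which the theorem asserts for eps in [0,1)). *)
Definition delta (f : R -> R) (eps : R) : R :=
  epsilon (inhabits 0) (fun m => is_glb (dist_set f eps) m).

(* Main.v *)
Require Import Defs.
From Stdlib Require Import Reals Lra Lia ClassicalEpsilon.
Open Scope R_scope.

Lemma inv_le_iff (a t : R) : 0 < a -> (/ a <= t <-> 1 <= a * t).
Proof. intros Ha; split; intro H.
- apply Rmult_le_compat_l with (r:=a) in H; [|lra]. rewrite Rinv_r in H; lra.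
- replace t with (/a * (a*t)) by (field; lra).
  rewrite <- (Rmult_1_r (/a)) at 1. apply Rmult_le_compat_l; [left; apply Rinv_0_lt_compat; lra|lra].
Qed.

Lemma le_inv_iff (a t : R) : 0 < a -> (t <= / a <-> a * t <= 1).
Proof. intros Ha; split; intro H.
- apply Rmult_le_compat_l with (r:=a) in H; [|lra]. rewrite Rinv_r in H; lra.
- replace t with (/a * (a*t)) by (field; lra).
  rewrite <- (Rmult_1_r (/a)) at 2. apply Rmult_le_compat_l; [left; apply Rinv_0_lt_compat; lra|lra].
Qed.

Lemma le_div_iff (a t c : R) : 0 < a -> (t <= c / a <-> a * t <= c).
Proof. intros Ha; split; intro H.
- apply Rmult_le_compat_l with (r:=a) in H; [|lra]. replace (a * (c/a)) with c in H by (field; lra); lra.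
- replace t with (/a * (a*t)) by (field; lra). unfold Rdiv. rewrite (Rmult_comm c).
  apply Rmult_le_compat_l; [left; apply Rinv_0_lt_compat; lra|lra].
Qed.

Lemma div_le_iff (a t c : R) : 0 < a -> (c / a <= t <-> c <= a * t).
Proof. intros Ha; split; intro H.
- apply Rmult_le_compat_l with (r:=a) in H; [|lra]. replace (a * (c/a)) with c in H by (field; lra); lra.
- replace t with (/a * (a*t)) by (field; lra). unfold Rdiv. rewrite (Rmult_comm c).
  apply Rmult_le_compat_l; [left; apply Rinv_0_lt_compat; lra|lra].
Qed.

Lemma INR_ge1 (n : nat) : (1 <= n)%nat -> 1 <= INR n.
Proof. intro H. apply le_INR in H. simpl in H. exact H. Qed.

Definition inI (n : nat) (t : R) := 1 <= (INR n + 1) * t /\ INR n * t <= 1.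

Lemma inI_iff n t : (1 <= n)%nat -> (/ (INR n + 1) <= t <= / INR n <-> inI n t).
Proof. intros Hn. pose proof (INR_ge1 n Hn). unfold inI.
 rewrite inv_le_iff by lra. rewrite le_inv_iff by lra. tauto. Qed.

Lemma fval f n t : spec_f f -> (1 <= n)%nat -> inI n t ->
  f t = Rabs ((2 * INR n + 1) * t - 2).
Proof.
 intros [_ Hs] Hn Ht. pose proof (INR_ge1 n Hn) as HN.
 destruct (Hs n Hn) as [H1 H2]. apply inI_iff in Ht; auto.
 destruct (Rle_dec t (2 / (2 * INR n + 1))) as [Hle|Hle].
 - rewrite H1 by lra. apply le_div_iff in Hle; [|lra].
   rewrite Rabs_left1 by lra. field. lra.
 - rewrite H2 by lra. assert (2 / (2 * INR n + 1) <= t) as Hge by lra.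
   apply div_le_iff in Hge; [|lra].
   rewrite Rabs_right by lra. field. lra.
Qed.

Lemma exists_I t : 0 < t <= 1 -> exists n, (1 <= n)%nat /\ inI n t.
Proof.
 intros Ht.
 assert (forall N, / (INR N + 1) <= t -> exists n, (1 <= n)%nat /\ inI n t).
 { induction N as [|N IH]; intros HN.
   - exists 1%nat. split; auto. unfold inI. simpl in *. lra.
   - destruct (Rle_dec (/ (INR N + 1)) t) as [H|H]; [now apply IH|].
     exists (S N). split; [lia|]. apply inI_iff; [lia|]. rewrite S_INR in *. lra. }
 destruct (INR_unbounded (/ t)) as [N HN]. apply (H N).
 rewrite <- (Rinv_inv t). left. apply Rinv_lt_contravar. apply Rmult_lt_0_compat. apply Rinv_0_lt_compat; lra.
 pose proof (pos_INR N); lra. lra.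
Qed.

Lemma inI_unique n m t : (1 <= n)%nat -> (1 <= m)%nat -> inI n t -> inI m t ->
  Rabs ((2 * INR n + 1) * t - 2) = Rabs ((2 * INR m + 1) * t - 2).
Proof.
 assert (forall n m t, (1 <= n)%nat -> (n < m)%nat -> inI n t -> inI m t ->
  Rabs ((2 * INR n + 1) * t - 2) = Rabs ((2 * INR m + 1) * t - 2)).
 { clear. intros n m t Hn Hnm [A1 A2] [B1 B2].
   apply lt_INR in Hnm. assert (INR n + 1 <= INR m) as Hle.
   { rewrite <- S_INR. apply le_INR. apply INR_lt in Hnm. lia. }
   pose proof (INR_ge1 n Hn).
   assert (Ht : t > 0) by nra.
   assert (INR m = INR n + 1) by nra.
   rewrite H0. assert ((INR n + 1) * t = 1) by nra.
   rewrite Rabs_left1 by nra. rewrite Rabs_right by nra. nra. }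
 intros Hn Hm A B. destruct (Nat.lt_trichotomy n m) as [h|[h|h]].
 - now apply H. - now subst. - symmetry; now apply H.
Qed.
Definition Pf (t v : R) : Prop :=
  (t = 0 /\ v = 0) \/ exists n, (1 <= n)%nat /\ inI n t /\ v = Rabs ((2 * INR n + 1) * t - 2).
Definition F (t : R) : R := epsilon (inhabits 0) (Pf t).

Lemma F_spec : spec_f F.
Proof.
 split.
 - unfold F. assert (Pf 0 (epsilon (inhabits 0) (Pf 0))) as H.
   { apply epsilon_spec. exists 0. left; auto. }
   destruct H as [[_ H]|[n [Hn [[A B] _]]]]; auto. lra.
 - intros n Hn.
   assert (forall t, inI n t -> F t = Rabs ((2 * INR n + 1) * t - 2)) as K.
   { intros t Ht. unfold F.
     assert (Pf t (epsilon (inhabits 0) (Pf t))) as H.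
     { apply epsilon_spec. eexists. right. exists n. eauto. }
     destruct H as [[E _]|[m [Hm [Hmt ->]]]].
     - subst t. destruct Ht; lra.
     - apply inI_unique; auto. }
   pose proof (INR_ge1 n Hn) as HN.
   assert (/ (INR n + 1) <= 2 / (2 * INR n + 1)) as L1.
   { apply inv_le_iff; [lra|]. replace ((INR n+1)*(2/(2*INR n+1))) with (1 + /(2*INR n+1)) by (field; lra).
     assert (0 < /(2*INR n+1)) by (apply Rinv_0_lt_compat; lra). lra. }
   assert (2 / (2 * INR n + 1) <= / INR n) as L2.
   { apply le_inv_iff; [lra|]. replace (INR n*(2/(2*INR n+1))) with (1 - /(2*INR n+1)) by (field; lra).
     assert (0 < /(2*INR n+1)) by (apply Rinv_0_lt_compat; lra). lra. }
   split; intros t Ht; rewrite K by (apply inI_iff; auto; lra).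
   + destruct Ht as [_ Ht]. apply le_div_iff in Ht; [|lra].
     rewrite Rabs_left1 by lra. field. lra.
   + destruct Ht as [Ht _]. apply div_le_iff in Ht; [|lra].
     rewrite Rabs_right by lra. field. lra.
Qed.
Lemma f_bound f t : spec_f f -> 0 <= t <= 1 -> 0 <= f t <= t.
Proof.
 intros Hf Ht. destruct (Req_dec t 0) as [->|Hz].
 - destruct Hf as [-> _]. lra.
 - destruct (exists_I t) as [n [Hn Hi]]; [lra|]. rewrite (fval f n t Hf Hn Hi).
   pose proof (INR_ge1 n Hn). destruct Hi as [A B]. split; [apply Rabs_pos|].
   unfold Rabs; destruct (Rcase_abs _); nra.
Qed.

Lemma f_uniq f g t : spec_f f -> spec_f g -> 0 <= t <= 1 -> f t = g t.
Proof.
 intros Hf Hg Ht. destruct (Req_dec t 0) as [->|Hz].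
 - destruct Hf as [-> _]; destruct Hg as [-> _]; auto.
 - destruct (exists_I t) as [n [Hn Hi]]; [lra|]. rewrite (fval f n t Hf Hn Hi), (fval g n t Hg Hn Hi). auto.
Qed.

Lemma lip_one f n x y : spec_f f -> (1 <= n)%nat -> inI n x -> inI n y ->
  Rabs (f x - f y) <= (2 * INR n + 1) * Rabs (x - y).
Proof.
 intros Hf Hn Hx Hy. rewrite (fval f n x Hf Hn Hx), (fval f n y Hf Hn Hy).
 pose proof (INR_ge1 n Hn).
 replace ((2 * INR n + 1) * Rabs (x - y)) with (Rabs ((2 * INR n + 1) * x - 2 - ((2 * INR n + 1) * y - 2))).
 2:{ replace ((2 * INR n + 1) * x - 2 - ((2 * INR n + 1) * y - 2)) with ((2 * INR n + 1) * (x - y)) by ring.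
     rewrite Rabs_mult, (Rabs_right (2 * INR n + 1)) by lra. auto. }
 apply Rabs_triang_inv2.
Qed.

Lemma lip_union (g : R -> R) a c b L : a <= c <= b -> 0 <= L ->
  (forall x y, a <= x <= c -> a <= y <= c -> Rabs (g x - g y) <= L * Rabs (x - y)) ->
  (forall x y, c <= x <= b -> c <= y <= b -> Rabs (g x - g y) <= L * Rabs (x - y)) ->
  forall x y, a <= x <= b -> a <= y <= b -> Rabs (g x - g y) <= L * Rabs (x - y).
Proof.
 intros Hc HL H1 H2.
 assert (forall x y, a <= x <= c -> c <= y <= b -> Rabs (g x - g y) <= L * Rabs (x - y)) as M.
 { intros x y Hx Hy. pose proof (H1 x c Hx ltac:(lra)). pose proof (H2 c y ltac:(lra) Hy).
   pose proof (Rabs_triang (g x - g c) (g c - g y)).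
   replace (g x - g c + (g c - g y)) with (g x - g y) in H3 by ring.
   rewrite (Rabs_left1 (x - c)) in H by lra. rewrite (Rabs_left1 (c - y)) in H0 by lra.
   rewrite (Rabs_left1 (x - y)) by lra. nra. }
 intros x y Hx Hy. destruct (Rle_dec x c); destruct (Rle_dec y c).
 - apply H1; lra.
 - apply M; lra.
 - rewrite Rabs_minus_sym, (Rabs_minus_sym x). apply M; lra.
 - apply H2; lra.
Qed.

Lemma Lip f N : spec_f f -> (1 <= N)%nat -> forall x y,
  / (INR N + 1) <= x <= 1 -> / (INR N + 1) <= y <= 1 ->
  Rabs (f x - f y) <= (2 * INR N + 1) * Rabs (x - y).
Proof.
 intros Hf HN. induction HN as [|N HN IH].
 - intros x y Hx Hy. apply (lip_one f 1); auto; apply inI_iff; auto; simpl in *; lra.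
 - pose proof (INR_ge1 N HN). rewrite S_INR.
   apply (lip_union f (/ (INR N + 1 + 1)) (/ (INR N + 1)) 1).
   + split. apply Rinv_le_contravar; lra. rewrite <- Rinv_1. apply Rinv_le_contravar; lra.
   + lra.
   + intros x y Hx Hy. rewrite <- S_INR. apply lip_one; auto. apply inI_iff; auto. rewrite S_INR. lra.
     apply inI_iff; auto. rewrite S_INR. lra.
   + intros x y Hx Hy. apply Rle_trans with ((2 * INR N + 1) * Rabs (x - y)).
     apply IH; auto. pose proof (Rabs_pos (x - y)). nra.
Qed.
Lemma small_inv x : 0 < x -> exists N, (1 <= N)%nat /\ / (INR N + 1) < x.
Proof.
 intros Hx. destruct (INR_unbounded (/ x)) as [N HN]. exists (S N). split; [lia|].
 rewrite S_INR. rewrite <- (Rinv_inv x). apply Rinv_lt_contravar.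
 apply Rmult_lt_0_compat. apply Rinv_0_lt_compat; lra. pose proof (pos_INR N); lra. lra.
Qed.

Lemma f_cont f x : spec_f f -> unit_interval x -> continue_in f unit_interval x.
Proof.
 intros Hf Hx. unfold continue_in, limit1_in, limit_in, D_x, unit_interval in *. simpl. unfold R_dist.
 intros eps Heps. destruct (Req_dec x 0) as [->|Hz].
 - exists eps. split; auto. intros y [[Hy _] Hd]. pose proof (f_bound f y Hf Hy).
   destruct Hf as [-> _]. rewrite Rminus_0_r in *. rewrite Rabs_right in * by lra. lra.
 - destruct (small_inv x) as [N [HN Ha]]; [lra|]. pose proof (INR_ge1 N HN).
   set (a := / (INR N + 1)) in *. set (L := 2 * INR N + 1).
   assert (0 < a) by (apply Rinv_0_lt_compat; lra).
   exists (Rmin (x - a) (eps / L)). split.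
   { apply Rmin_pos. lra. apply Rdiv_lt_0_compat; unfold L; lra. }
   intros y [[Hy _] Hd]. pose proof (Rmin_l (x - a) (eps / L)). pose proof (Rmin_r (x - a) (eps / L)).
   assert (a <= y) by (apply Rabs_def2 in Hd; lra).
   pose proof (Lip f N Hf HN y x ltac:(unfold a in *; lra) ltac:(unfold a in *; lra)).
   apply Rle_lt_trans with (L * Rabs (y - x)); [exact H4|].
   apply Rlt_le_trans with (L * (eps / L)). apply Rmult_lt_compat_l. unfold L; lra. lra.
   right. field. unfold L; lra.
Qed.

Lemma F1 f : spec_f f -> f 1 = 1.
Proof. intros Hf. rewrite (fval f 1 1 Hf); auto. simpl. rewrite Rabs_right; lra. unfold inI; simpl; lra. Qed.

Lemma osc f : spec_f f -> is_lub (osc_set f) 1.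
Proof.
 intros Hf. split.
 - intros s [x [y [Hx [Hy ->]]]]. pose proof (f_bound f x Hf Hx). pose proof (f_bound f y Hf Hy).
   unfold unit_interval in *. apply Rabs_le. lra.
 - intros b Hb. apply Hb. exists 1, 0. unfold unit_interval. repeat split; try lra.
   rewrite F1 by auto. destruct Hf as [-> _]. rewrite Rabs_right; lra.
Qed.

Lemma glb_exists f eps : spec_f f -> 0 <= eps < 1 -> exists m, is_glb (dist_set f eps) m.
Proof.
 intros Hf He.
 destruct (completeness (fun z => dist_set f eps (- z))) as [m [Hm1 Hm2]].
 - exists 0. intros z [x [y [_ [_ [_ Hz]]]]]. pose proof (Rabs_pos (x - y)). lra.
 - exists (-1). exists 1, 0. unfold unit_interval. repeat split; try lra.
   rewrite F1 by auto. destruct Hf as [-> _]. rewrite Rabs_right; lra.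
   rewrite Rabs_right; lra.
 - exists (- m). split.
   + intros d Hd. assert (- d <= m). apply Hm1. rewrite Ropp_involutive. auto. lra.
   + intros b Hb. assert (m <= - b). apply Hm2. intros z Hz. apply Hb in Hz. lra. lra.
Qed.

Lemma glb_uniq E m1 m2 : is_glb E m1 -> is_glb E m2 -> m1 = m2.
Proof. intros [A B] [C D]. apply Rle_antisym; [apply D|apply B]; auto. Qed.

Lemma delta_spec f eps : spec_f f -> 0 <= eps < 1 ->
  is_glb (dist_set f eps) (delta f eps) /\ 0 <= delta f eps.
Proof.
 intros Hf He. assert (is_glb (dist_set f eps) (delta f eps)) as H.
 { unfold delta. apply epsilon_spec. now apply glb_exists. }
 split; auto. apply H. intros d [x [y [_ [_ [_ ->]]]]]. apply Rabs_pos.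
Qed.
Lemma lt_inv_mul (a t : R) : 0 < a -> / a < t -> 1 < a * t.
Proof. intros Ha H. apply Rmult_lt_compat_l with (r:=a) in H; [|lra]. rewrite Rinv_r in H; lra. Qed.

Lemma Rabs_ge_cases a b e : Rabs (a - b) >= e -> a - b >= e \/ b - a >= e.
Proof. unfold Rabs; destruct (Rcase_abs _); lra. Qed.

Lemma lb1_half f n x y : spec_f f -> (2 <= n)%nat -> unit_interval x -> unit_interval y ->
  Rabs (f x - f y) >= / INR n -> x < / (INR n + 1) -> / (INR n * (2 * INR n + 1)) <= Rabs (x - y).
Proof.
 intros Hf Hn Hx Hy Hd Ha. assert (HN : 2 <= INR n) by (apply le_INR in Hn; simpl in Hn; lra).
 pose proof (f_bound f x Hf Hx). pose proof (f_bound f y Hf Hy).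
 assert (/ (INR n + 1) < / INR n) by (apply Rinv_lt_contravar; nra).
 destruct (Rabs_ge_cases _ _ _ Hd) as [h|h]; [lra|].
 rewrite Rabs_minus_sym, Rabs_right by lra.
 assert (/ INR n - / (INR n + 1) - / (INR n * (2 * INR n + 1)) = / ((INR n + 1) * (2 * INR n + 1))) as E.
 { field. lra. }
 assert (0 < / ((INR n + 1) * (2 * INR n + 1))) by (apply Rinv_0_lt_compat; nra).
 lra.
Qed.

Lemma lb1 f n x y : spec_f f -> (2 <= n)%nat -> unit_interval x -> unit_interval y ->
  Rabs (f x - f y) >= / INR n -> / (INR n * (2 * INR n + 1)) <= Rabs (x - y).
Proof.
 intros Hf Hn Hx Hy Hd. assert (HN : 2 <= INR n) by (apply le_INR in Hn; simpl in Hn; lra).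
 destruct (Rlt_dec x (/ (INR n + 1))) as [h|h]. { eapply lb1_half; eauto. }
 destruct (Rlt_dec y (/ (INR n + 1))) as [h'|h'].
 { rewrite Rabs_minus_sym. rewrite Rabs_minus_sym in Hd. eapply lb1_half; eauto. }
 pose proof (Lip f n Hf ltac:(lia) x y ltac:(unfold unit_interval in *; lra) ltac:(unfold unit_interval in *; lra)).
 rewrite Rinv_mult. apply div_le_iff. lra. lra.
Qed.

Lemma claim f n t : spec_f f -> (2 <= n)%nat -> unit_interval t -> f t > / INR n ->
  2 / (2 * INR n - 1) <= t.
Proof.
 intros Hf Hn Ht Hft. assert (HN : 2 <= INR n) by (apply le_INR in Hn; simpl in Hn; lra).
 pose proof (f_bound f t Hf Ht).
 assert (Hnt : 1 < INR n * t) by (apply lt_inv_mul; lra).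
 destruct (exists_I t) as [m [Hm Hi]]. { unfold unit_interval in *. split; [|lra].
   destruct (Req_dec t 0) as [->|]; [|lra]. destruct Hf as [Hf0 _]. lra. }
 rewrite (fval f m t Hf Hm Hi) in Hft. pose proof Hi as [A B].
 assert (INR m < INR n) by nra. apply INR_lt in H0.
 pose proof (INR_ge1 m Hm).
 apply div_le_iff. lra. apply Rnot_lt_le. intro Hc.
 assert (n = S m \/ (S (S m) <= n)%nat) as [E|E] by lia.
 - subst n. rewrite S_INR in *. rewrite Rabs_left1 in Hft by nra.
   assert (2 - (2 * INR m + 1) * t <= / (INR m + 1)).
   { apply le_inv_iff. lra. nra. }
   lra.
 - apply le_INR in E. rewrite !S_INR in E. nra.
Qed.

Lemma lb2_half f n x y eps : spec_f f -> (2 <= n)%nat -> / INR n < eps ->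
  unit_interval x -> unit_interval y ->
  Rabs (f x - f y) >= eps -> x < / INR n -> / (INR n * (2 * INR n - 1)) <= Rabs (x - y).
Proof.
 intros Hf Hn He Hx Hy Hd Ha. assert (HN : 2 <= INR n) by (apply le_INR in Hn; simpl in Hn; lra).
 pose proof (f_bound f x Hf Hx). pose proof (f_bound f y Hf Hy).
 destruct (Rabs_ge_cases _ _ _ Hd) as [h|h]; [lra|].
 pose proof (claim f n y Hf Hn Hy ltac:(lra)).
 rewrite Rabs_minus_sym, Rabs_right by lra.
 assert (2 / (2 * INR n - 1) - / INR n = / (INR n * (2 * INR n - 1))) as E.
 { field. lra. }
 lra.
Qed.

Lemma lb2 f n x y eps : spec_f f -> (2 <= n)%nat -> / INR n < eps ->
  unit_interval x -> unit_interval y ->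
  Rabs (f x - f y) >= eps -> / (INR n * (2 * INR n - 1)) <= Rabs (x - y).
Proof.
 intros Hf Hn He Hx Hy Hd. assert (HN : 2 <= INR n) by (apply le_INR in Hn; simpl in Hn; lra).
 destruct (Rlt_dec x (/ INR n)) as [h|h]. { eapply lb2_half; eauto. }
 destruct (Rlt_dec y (/ INR n)) as [h'|h'].
 { rewrite Rabs_minus_sym. rewrite Rabs_minus_sym in Hd. eapply lb2_half; eauto. }
 assert (INR (n - 1) = INR n - 1) as E by (rewrite minus_INR by lia; simpl; lra).
 pose proof (Lip f (n - 1) Hf ltac:(lia) x y) as L. rewrite E in L.
 replace (INR n - 1 + 1) with (INR n) in L by ring.
 assert (eps <= (2 * (INR n - 1) + 1) * Rabs (x - y)).
 { apply Rle_trans with (Rabs (f x - f y)). lra. apply L; unfold unit_interval in *; lra. }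
 rewrite Rinv_mult. apply div_le_iff. lra. lra.
Qed.
Theorem mainTheorem5 :
  (exists f : R -> R, spec_f f) /\
  (forall f g : R -> R, spec_f f -> spec_f g ->
     forall t, unit_interval t -> f t = g t) /\
  (forall f : R -> R, spec_f f ->
     (forall x, unit_interval x -> continue_in f unit_interval x) /\
     is_lub (osc_set f) 1 /\
     (forall eps, 0 <= eps < 1 ->
        is_glb (dist_set f eps) (delta f eps) /\ 0 <= delta f eps) /\
     (forall n : nat, (2 <= n)%nat ->
        delta f (/ INR n) = / (INR n * (2 * INR n + 1)) /\
        / (INR n * (2 * INR n + 1)) < / (INR n * (2 * INR n - 1)) /\
        (forall eps, / INR n < eps < 1 ->
           / (INR n * (2 * INR n - 1)) <= delta f eps) /\
        ~ continuity_pt (delta f) (/ INR n))).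
Proof.
 split; [exists F; apply F_spec|]. split; [intros; apply f_uniq; auto|].
 intros f Hf. split; [intros; now apply f_cont|]. split; [now apply osc|].
 split; [intros; now apply delta_spec|].
 intros n Hn. assert (HN : 2 <= INR n) by (apply le_INR in Hn; simpl in Hn; lra).
 assert (Hinv : 0 < / INR n < 1).
 { split. apply Rinv_0_lt_compat; lra. rewrite <- Rinv_1. apply Rinv_lt_contravar; lra. }
 assert (D1 : delta f (/ INR n) = / (INR n * (2 * INR n + 1))).
 { apply (glb_uniq (dist_set f (/ INR n))). apply delta_spec; auto; lra.
   split.
   - intros d [x [y [Hx [Hy [Hd ->]]]]]. eapply lb1; eauto.
   - intros b Hb. apply Hb. exists (2 / (2 * INR n + 1)), (/ INR n).
     assert (0 < 2 / (2 * INR n + 1)) by (apply Rdiv_lt_0_compat; lra).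
     assert (2 / (2 * INR n + 1) < / INR n).
     { apply Rlt_le_trans with (2 / (2 * INR n + 1) + / (INR n * (2 * INR n + 1))).
       assert (0 < / (INR n * (2 * INR n + 1))) by (apply Rinv_0_lt_compat; nra). lra.
       right. field. lra. }
     assert (Hn1 : (1 <= n)%nat) by lia.
     assert (inI n (2 / (2 * INR n + 1))) as I1.
     { apply inI_iff; auto. split; [|lra]. apply inv_le_iff; [lra|].
       replace ((INR n+1)*(2/(2*INR n+1))) with (1 + /(2*INR n+1)) by (field; lra).
       assert (0 < /(2*INR n+1)) by (apply Rinv_0_lt_compat; lra). lra. }
     assert (inI n (/ INR n)) as I2.
     { apply inI_iff; auto. split; [|lra]. apply inv_le_iff; [lra|].
       replace ((INR n+1)*(/INR n)) with (1 + /INR n) by (field; lra). lra. }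
     unfold unit_interval. repeat split; try lra.
     + rewrite (fval f n _ Hf Hn1 I1), (fval f n _ Hf Hn1 I2).
       replace ((2 * INR n + 1) * (2 / (2 * INR n + 1)) - 2) with 0 by (field; lra).
       replace ((2 * INR n + 1) * / INR n - 2) with (/ INR n) by (field; lra).
       rewrite Rabs_R0, Rminus_0_l, Rabs_Ropp, Rabs_Rabsolu, Rabs_right; lra.
     + rewrite Rabs_left by lra. field. lra. }
 assert (D2 : / (INR n * (2 * INR n + 1)) < / (INR n * (2 * INR n - 1))).
 { assert (0 < INR n * (2 * INR n - 1)) by nra. assert (0 < INR n * (2 * INR n + 1)) by nra.
   apply Rinv_lt_contravar. now apply Rmult_lt_0_compat. nra. }
 assert (D3 : forall eps, / INR n < eps < 1 -> / (INR n * (2 * INR n - 1)) <= delta f eps).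
 { intros eps He. destruct (delta_spec f eps Hf ltac:(lra)) as [[_ G] _].
   apply G. intros d [x [y [Hx [Hy [Hd ->]]]]]. eapply lb2; eauto. lra. }
 split; auto. split; auto. split; auto.
 intro Hc. unfold continuity_pt, continue_in, limit1_in, limit_in, D_x, no_cond in Hc. simpl in Hc.
 unfold R_dist in Hc.
 set (gap := / (INR n * (2 * INR n - 1)) - / (INR n * (2 * INR n + 1))).
 destruct (Hc gap ltac:(unfold gap; lra)) as [alp [Halp H]].
 set (e := / INR n + Rmin (alp / 2) ((1 - / INR n) / 2)).
 assert (0 < Rmin (alp / 2) ((1 - / INR n) / 2)) by (apply Rmin_pos; lra).
 pose proof (Rmin_l (alp / 2) ((1 - / INR n) / 2)). pose proof (Rmin_r (alp / 2) ((1 - / INR n) / 2)).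
 specialize (H e). assert (/ INR n < e < 1) as He by (unfold e; lra).
 pose proof (D3 e He).
 assert (Rabs (delta f e - delta f (/ INR n)) < gap).
 { apply H. split. split; auto. lra. unfold e. rewrite Rabs_right; lra. }
 rewrite D1 in H4. apply Rabs_def2 in H4. unfold gap in H4. lra.
Qed.
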